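(* Let $q$ be a prime power, $h\geq 2$, and let $f:\mathbb{F}_{q^h}\to\mathbb{F}_q$ be any nonzero $\mathbb{F}_q$-linear functional. Then there exist $\alpha\in\mathbb{F}_{q^h}\setminus\mathbb{F}_q$ and an $\mathbb{F}_q$-linear functional $g:\mathbb{F}_{q^h}\to\mathbb{F}_q$ such that (1) $g(1)=g(\alpha)=1$; (2) $f(1/\alpha)\neq 0$; (3) $f\left(\frac{k-1}{k(k-1)\alpha-k^2}\right)\neq 1$ for all $k\in\mathbb{F}_q\setminus\{0,1\}$. *)

(* Defs.v *)
From HB Require Import structures.
From mathcomp Require Import all_boot all_order all_algebra all_field.
Set Implicit Arguments. Unset Strict Implicit. Unset Printing Implicit Defensive.

(* Main.v *)
From HB Require Import structures.
From mathcomp Require Import all_boot all_order all_algebra all_field.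
From mathcomp Require Import zify ring.
Import GRing.Theory.
Local Open Scope ring_scope.

Lemma bigcup_card_le (T I : finType) (P : pred I) (A : I -> {set T}) (n : nat) :
  (forall i, P i -> #|A i| <= n)%N ->
  (#|\bigcup_(i | P i) A i| <= #|P| * n)%N.
Proof.
move=> HA; rewrite -sum_nat_const.
elim/big_ind2: _ => //; first by rewrite cards0.
move=> m U p V Hm Hp; apply: leq_trans (leq_of_leqif (leq_card_setU U V)) _.
exact: leq_add.
Qed.

Section S.
Variables (F : finFieldType) (L : fieldExtType F) (f : 'Hom(L, F^o)).
Let T := finvect_type L.
Lemma ex_nz : f != 0 -> exists y, f y != 0.
Proof. by case/lfunPn=> u; rewrite lfunE /= => ?; exists u. Qed.

Lemma dim_ker : f != 0 -> \dim (lker f) = (\dim {:L}).-1.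
Proof.
move=> /ex_nz [y fy].
have := limg_ker_dim f fullv; rewrite capfv.
have -> : \dim (f @: fullv) = 1%N.
  apply/eqP; rewrite eqn_leq; apply/andP; split.
    by have := dimvS (subvf (f @: fullv)); rewrite dimvf.
  rewrite lt0n dimv_eq0; apply/negP=> /eqP H.
  have : f y \in (f @: fullv)%VS by rewrite memv_img ?memvf.
  by rewrite H memv0 (negPf fy).
by move=> <-; rewrite addn1.
Qed.

Lemma card_H (v : F) : f != 0 ->
  (#|[set x : T | f x == v]| <= #|F| ^ (\dim {:L}).-1)%N.
Proof.
move=> hf; have [y fy] := ex_nz hf.
pose x0 : T := (v / f y) *: y.
have fx0 : f x0 = v.
  by rewrite /x0 linearZ /= /GRing.scale /= mulfVK.
pose K := [set x : T | x \in lker f].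
have cK : #|K| = (#|F| ^ (\dim {:L}).-1)%N.
  by rewrite cardsE -dim_ker // ; exact: (@card_vspace F T _ (lker f)).
rewrite -cK; apply: leq_trans (leq_imset_card (fun x => x + x0) K).
apply: subset_leq_card; apply/subsetP=> x; rewrite inE => /eqP fx.
apply/imsetP; exists (x - x0); last by rewrite subrK.
by rewrite inE memv_ker linearB /= fx fx0 subrr.
Qed.

Lemma key_alg (k : F) (a : L) : k != 0 -> k != 1 -> a \notin 1%VS ->
  ((k - 1)%:A) / ((k * (k - 1))%:A * a - (k ^+ 2)%:A)
  = k^-1 *: (a - (k / (k - 1))%:A)^-1.
Proof.
move=> k0 k1 a1.
have k10 : k - 1 != 0 by rewrite subr_eq0.
set y := a - _.
have y0 : y != 0.
  apply: contraNneq a1; rewrite /y => /eqP; rewrite subr_eq0 => /eqP ->.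
  by rewrite rpredZ // memv_line.
have -> : (k * (k - 1))%:A * a - (k ^+ 2)%:A = (k * (k - 1))%:A * y.
  rewrite /y (mulrBr ((k * (k - 1))%:A)); congr (_ - _); rewrite mulr_algl scalerA; congr (_ *: 1).
  by field.
rewrite invfM mulrA -[RHS]mulr_algl; congr (_ * _).
rewrite -!in_algE -fmorphV -rmorphM; congr (in_alg _ _).
by rewrite invfM mulrCA mulfV // mulr1.
Qed.
End S.

Theorem proposition3p5 (F : finFieldType) (L : fieldExtType F)
    (hL : (2 <= \dim {:L})%N) (f : 'Hom(L, F^o)) (hf : f != 0) :
  exists (alpha : L) (g : 'Hom(L, F^o)),
    alpha \notin 1%VS /\
    [/\ g 1 = 1, g alpha = 1,
        f alpha^-1 != 0 &
        forall k : F, k != 0 -> k != 1 ->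
          f (((k - 1)%:A) / ((k * (k - 1))%:A * alpha - (k ^+ 2)%:A)) != 1].
Proof.
pose T := finvect_type L.
pose q := #|F|. pose h := \dim {:L}.
pose B (k : F) := [set a : T | f ((a - (k / (k - 1))%:A)^-1) == k].
have cB k : (#|B k| <= q ^ h.-1)%N.
  have inj : injective (fun a : T => (a - (k / (k - 1))%:A)^-1).
    by move=> x z /= /invr_inj /addIr.
  apply: leq_trans (@card_H F L f k hf); rewrite -[X in (_ <= X)%N](card_preimset _ inj).
  by apply: subset_leq_card; apply/subsetP=> x; rewrite !inE.
pose S := [set a : T | a \in (1%VS : {vspace L})].
have cS : #|S| = q by rewrite cardsE; exact: (card_vspace1 (Falgebra.class T)).
pose U := \bigcup_(k | k != 1) B k.
have cU : (#|U| <= (q - 1) * q ^ h.-1)%N.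
  apply: leq_trans (@bigcup_card_le T F (fun k => k != 1) B _ (fun i _ => cB i)) _.
  have -> : #|(fun k : F => k != 1)| = #|predC1 (1 : F)| by apply: eq_card.
  by rewrite cardC1 subn1.
have cSU : (1 <= #|S :&: U|)%N.
  apply/card_gt0P; exists 0; rewrite !inE rpred0 /=.
  apply/bigcupP; exists 0; first by rewrite eq_sym oner_eq0.
  by rewrite inE mul0r scale0r subr0 invr0 linear0.
have cT : #|T| = (q ^ h)%N.
  by rewrite -(card_vspacef (Vector.class T)) card_vspace.
have q1 : (1 < q)%N by apply/card_gt1P; exists 0, 1; rewrite eq_sym oner_eq0.
have lt : (#|S :|: U| < #|T|)%N.
  rewrite cardsU cS cT.
  have hpos : (0 < h)%N by apply: leq_trans hL.
  have hq : (q ^ h = q * q ^ h.-1)%N by rewrite -expnS; move: hpos; clear -h; clearbody h; case: h.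
  have hQ : (q <= q ^ h.-1)%N.
    rewrite -{1}(expn1 q) leq_pexp2l ?(ltnW q1) //; move: hL; rewrite -/h; lia.
  move: cU cSU; set X := #|U|; set Y := #|_ :&: _|; move=> cU cSU.
  have YS : (Y <= q)%N by rewrite -cS /Y subset_leq_card // subsetIl.
  rewrite hq; nia.
have [a] : exists a, a \notin S :|: U.
  apply/existsP; rewrite -negb_forall; apply/negP=> /forallP H.
  by move: lt; rewrite (_ : S :|: U = setT) ?cardsT ?ltnn //; apply/setP=> x; rewrite in_setT H.
rewrite inE negb_or => /andP[aS aU].
have a1 : (a : L) \notin 1%VS by move: aS; rewrite inE.
have [gl Hg] := linear_of_free [:: 1; (a : L)] [:: (1 : F^o); 1].
have fr : free [:: (1 : L); a].
  have pe : perm_eq [:: a; 1] [:: (1:L); a] by rewrite (perm_catC [:: a] [:: 1]).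
  rewrite -(perm_free pe) free_cons seq1_free oner_eq0 andbT span_seq1.
  by apply: contra a1 => /vlineP [c ->]; rewrite rpredZ // memv_line.
exists a, (linfun gl); split => //.
move: (Hg fr erefl) => [] g1 ga.
split; rewrite ?lfunE //.
- apply: contra aU => /eqP fa; apply/bigcupP; exists 0; first by rewrite eq_sym oner_eq0.
  by rewrite inE mul0r scale0r subr0 fa.
- move=> k k0 k1; rewrite (@key_alg F L) // linearZ /=.
  apply: contra aU => /eqP H; apply/bigcupP; exists k => //.
  rewrite inE; apply/eqP.
  have -> : f ((a - (k / (k - 1))%:A)^-1) = k * (k^-1 *: f ((a - (k / (k - 1))%:A)^-1)).
    by rewrite /GRing.scale /= mulrA divff // mul1r.
  by rewrite H mulr1.
Qed.
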